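(* Let $n\ge4$ and let $Z^*$ be a nonzero $2$-cocycle over $[n]$. Then the facet graph $G_2(Z^* )$ is $2$-connected.
   Context: Fix a field $\mathbb F$. A $j$-simplex is a $(j+1)$-element subset of $[n]$ oriented by increasing order. For a simplex $\rho$ and $\tau=\rho\setminus\{p\}$ with $p$ the $i$-th smallest element of $\rho$, $\mathrm{sign}(\rho,\tau)=(-1)^{i-1}$. A $2$-cochain is a formal $\mathbb F$-combination of $2$-simplices; the coboundary is $\delta\tau=\sum_{p\in[n]\setminus\tau}\mathrm{sign}(\tau\cup\{p\},\tau)(\tau\cup\{p\})$, extended linearly. A $2$-cocycle is a $2$-cochain $Z$ with $\delta Z=0$. The facet graph $G_2(Z^* )$ has vertex set $\mathrm{Supp}(Z^* )$ (simplices with nonzero coefficient), two $2$-simplices adjacent iff they share an edge. A graph is $k$-connected if deleting any set of fewer than $k$ of its vertices leaves a nonempty connected graph. *)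

(* Defs.v *)
From HB Require Import structures.
From mathcomp Require Import all_boot all_order all_algebra.
Set Implicit Arguments. Unset Strict Implicit. Unset Printing Implicit Defensive.
Import GRing.Theory.
Local Open Scope ring_scope.

(* The ground set [n] is modelled by 'I_n (order-isomorphic to {1..n}).
   A j-simplex is a set s : {set 'I_n} with #|s| = j+1, oriented increasingly.
   A 2-cochain over F is a function Z : {set 'I_n} -> F; only its values on
   3-element sets (2-simplices) are meaningful. *)

Definition cochain (F : fieldType) (n : nat) := {set 'I_n} -> F.

(* number of elements of rho smaller than p, i.e. i-1 when p is the i-th smallest *)
Definition rank_in (n : nat) (rho : {set 'I_n}) (p : 'I_n) : nat :=
  #|[set q in rho | (q < p)%N]|.

Definition simplex_sign (F : fieldType) (n : nat) (rho : {set 'I_n}) (p : 'I_n) : F :=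
  (-1) ^+ rank_in rho p.

Definition coboundary (F : fieldType) (n : nat) (Z : cochain F n) : cochain F n :=
  fun rho => \sum_(p in rho) simplex_sign F rho p * Z (rho :\ p).

Definition is_2cocycle (F : fieldType) (n : nat) (Z : cochain F n) : Prop :=
  forall rho : {set 'I_n}, #|rho| = 4%N -> coboundary Z rho = 0.

Definition nonzero_2cochain (F : fieldType) (n : nat) (Z : cochain F n) : Prop :=
  exists s : {set 'I_n}, #|s| = 3%N /\ Z s != 0.

Definition supp2 (F : fieldType) (n : nat) (Z : cochain F n) : {set {set 'I_n}} :=
  [set s : {set 'I_n} | (#|s| == 3%N) && (Z s != 0)].

Definition share_edge (n : nat) (s t : {set 'I_n}) : bool :=
  (s != t) && (#|s :&: t| == 2%N).

Definition induced_rel (T : finType) (W : {set T}) (e : rel T) : rel T :=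
  fun x y => [&& x \in W, y \in W & e x y].

Definition k_connected (T : finType) (V : {set T}) (e : rel T) (k : nat) : Prop :=
  forall D : {set T}, D \subset V -> (#|D| < k)%N ->
    (V :\: D != set0) /\
    (forall x y, x \in V :\: D -> y \in V :\: D -> connect (induced_rel (V :\: D) e) x y).

Definition facet_graph_2connected (F : fieldType) (n : nat) (Z : cochain F n) : Prop :=
  k_connected (supp2 Z) (@share_edge n) 2.

(* Main.v *)
Require Import Defs.
From HB Require Import structures.
From mathcomp Require Import all_boot all_order all_algebra.
Set Implicit Arguments. Unset Strict Implicit. Unset Printing Implicit Defensive.
Import GRing.Theory.
Local Open Scope ring_scope.

Ltac neqs := repeat match goal with
  | H : is_true (?u != ?v) |- context [?u == ?v] => rewrite (negbTE H)
  | H : is_true (?u != ?v) |- context [?v == ?u] => rewrite (eq_sym v u) (negbTE H)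
  end.

Ltac setdec := let y := fresh "y" in apply/setP => y; rewrite !inE;
  repeat match goal with |- context [y == ?u] =>
     case: (y =P u) => [->|/eqP ?]; neqs; rewrite ?eqxx ?orbT ?orbF ?andbT ?andbF /= end;
  rewrite /= ?orbT ?orbF ?andbT ?andbF //.

Lemma card_tri (n : nat) (x a b : 'I_n) : x != a -> x != b -> a != b ->
  #|[set x; a; b]| = 3%N.
Proof.
move=> xa xb ab; have -> : [set x; a; b] = x |: (a |: [set b]) by setdec.
by rewrite !cardsU1 cards1 !inE; neqs.
Qed.

Lemma L3 (F : fieldType) (n : nat) (Z : cochain F n) (x a b c : 'I_n) :
  x != a -> x != b -> x != c -> a != b -> a != c -> b != c ->
  is_2cocycle Z -> Z [set x; a; b] != 0 ->
  Z [set a; b; c] != 0 \/ Z [set x; a; c] != 0 \/ Z [set x; b; c] != 0.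
Proof.
move=> xa xb xc ab ac bc cZ nz.
have c4 : #|[set x; a; b; c]| = 4%N.
  have -> : [set x; a; b; c] = x |: (a |: (b |: [set c])) by setdec.
  by rewrite !cardsU1 cards1 !inE; neqs.
have := cZ _ c4; rewrite /coboundary (bigD1 c) /=; last by rewrite !inE eqxx !orbT.
have e0 : [set x; a; b; c] :\ c = [set x; a; b] by setdec.
have ex : [set x; a; b; c] :\ x = [set a; b; c] by setdec.
have ea : [set x; a; b; c] :\ a = [set x; b; c] by setdec.
have eb : [set x; a; b; c] :\ b = [set x; a; c] by setdec.
case: (boolP (Z [set a; b; c] != 0)) => [h|/negPn/eqP h1]; first by left.
case: (boolP (Z [set x; a; c] != 0)) => [h|/negPn/eqP h2]; first by right; left.
case: (boolP (Z [set x; b; c] != 0)) => [h|/negPn/eqP h3]; first by right; right.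
rewrite big1 ?addr0.
  move/eqP; rewrite mulf_eq0 expf_eq0 oppr_eq0 oner_eq0 andbF /= e0.
  by rewrite (negbTE nz).
move=> p /andP [] /[swap] pc; rewrite !inE -!orbA => /or4P [] /eqP pe; subst p; rewrite ?eqxx // in pc.
- by rewrite ex h1 mulr0.
- by rewrite ea h3 mulr0.
- by rewrite eb h2 mulr0.
Qed.

Definition Gr (n : nat) (W : {set {set 'I_n}}) := induced_rel W (@share_edge n).

Lemma edgeW n (W : {set {set 'I_n}}) s t :
  s \in W -> t \in W -> share_edge s t -> connect (Gr W) s t.
Proof. by move=> sW tW st; apply: connect1; rewrite /Gr /induced_rel sW tW. Qed.

Lemma path2 n (W : {set {set 'I_n}}) s u t :
  s \in W -> u \in W -> t \in W -> share_edge s u -> share_edge u t ->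
  connect (Gr W) s t.
Proof.
move=> sW uW tW su ut; apply: (connect_trans (y := u)); exact: edgeW.
Qed.

Lemma path3 n (W : {set {set 'I_n}}) s u v t :
  s \in W -> u \in W -> v \in W -> t \in W ->
  share_edge s u -> share_edge u v -> share_edge v t ->
  connect (Gr W) s t.
Proof.
move=> sW uW vW tW su uv vt; apply: (connect_trans (y := u)); first exact: edgeW.
exact: (path2 uW vW tW).
Qed.

Lemma neq_w (T : finType) (y : T) (A B : {set T}) : y \in A -> y \notin B -> A != B.
Proof. by move=> yA yB; apply/eqP => E; move: yB; rewrite -E yA. Qed.

Lemma neq_w' (T : finType) (y : T) (A B : {set T}) : y \notin A -> y \in B -> A != B.
Proof. by move=> yA yB; apply/eqP => E; move: yA; rewrite E yB. Qed.

Lemma adj n (A B : {set 'I_n}) (p q : 'I_n) :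
  #|A| = 3%N -> #|B| = 3%N -> A != B -> p != q ->
  p \in A -> p \in B -> q \in A -> q \in B -> share_edge A B.
Proof.
move=> cA cB AB pq pA pB qA qB; rewrite /share_edge AB /=.
have le3 : (#|A :&: B| <= 3)%N by rewrite -cA subset_leq_card // subsetIl.
have ge2 : (2 <= #|A :&: B|)%N.
  have -> : 2%N = #|[set p; q]| by rewrite cards2 pq.
  apply: subset_leq_card; apply/subsetP => y.
  by rewrite !inE => /orP [] /eqP ->; rewrite ?pA ?pB ?qA ?qB.
have ne3 : #|A :&: B| != 3%N.
  apply/eqP => e3; move/negP: AB; apply; rewrite eqEcard cA cB leqnn andbT.
  have : A :&: B == A by rewrite eqEcard subsetIl e3 cA leqnn.
  by move/eqP => <-; rewrite subsetIr.
by rewrite eqn_leq -ltnS ltn_neqAle ne3 le3 ge2.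
Qed.

Lemma inWtri F n (Z : cochain F n) (r : {set 'I_n}) (p q u : 'I_n) :
  p != q -> p != u -> q != u -> Z [set p; q; u] != 0 -> [set p; q; u] != r ->
  [set p; q; u] \in supp2 Z :\ r.
Proof. by move=> pq pu qu nz ne; rewrite !inE ne /= card_tri // eqxx nz. Qed.

Lemma inWtri' F n (Z : cochain F n) (r : {set 'I_n}) (p q u : 'I_n) :
  [set p; q; u] \in supp2 Z :\ r -> Z [set p; q; u] != 0 /\ [set p; q; u] != r.
Proof. by rewrite !inE => /andP [-> /andP [_ ->]]. Qed.

Ltac ds := rewrite ?inE; neqs; rewrite /= ?eqxx ?orbT ?orbF //.
Ltac ne w := first [apply: (neq_w (y:=w)); by ds | apply: (neq_w' (y:=w)); by ds].
Ltac adjt p q w := apply: (@adj _ _ _ p q);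
  [ by apply: card_tri; ds | by apply: card_tri; ds | ne w | by ds ..].
Ltac inw := apply: inWtri; ds.

Lemma case1 F n (Z : cochain F n) (r : {set 'I_n}) (x a b c d : 'I_n) :
  x != a -> x != b -> x != c -> x != d -> a != b -> a != c -> a != d ->
  b != c -> b != d -> c != d -> is_2cocycle Z ->
  [set x; a; b] \in supp2 Z :\ r -> [set x; c; d] \in supp2 Z :\ r ->
  connect (Gr (supp2 Z :\ r)) [set x; a; b] [set x; c; d].
Proof.
move=> xa xb xc xd ab ac ad bc bd cd cZ sW tW.
set W := supp2 Z :\ r.
have [sZ sr] := inWtri' sW; have [tZ tr] := inWtri' tW.
have h1 := L3 xa xb xc ab ac bc cZ sZ.
have h2 := L3 xa xb xd ab ad bd cZ sZ.
have h3 : Z [set a; c; d] != 0 \/ Z [set x; a; c] != 0 \/ Z [set x; a; d] != 0.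
  have := L3 xc xd xa cd ltac:(by rewrite eq_sym) ltac:(by rewrite eq_sym) cZ tZ.
  have -> : [set c; d; a] = [set a; c; d] by setdec.
  have -> : [set x; c; a] = [set x; a; c] by setdec.
  by have -> : [set x; d; a] = [set x; a; d] by setdec.
have h4 : Z [set b; c; d] != 0 \/ Z [set x; b; c] != 0 \/ Z [set x; b; d] != 0.
  have := L3 xc xd xb cd ltac:(by rewrite eq_sym) ltac:(by rewrite eq_sym) cZ tZ.
  have -> : [set c; d; b] = [set b; c; d] by setdec.
  have -> : [set x; c; b] = [set x; b; c] by setdec.
  by have -> : [set x; d; b] = [set x; b; d] by setdec.
case: (boolP ([set x; a; c] \in W)) => [mW|/negP m1'].
  apply: (path2 sW mW tW); [adjt x a b | adjt x c d].
case: (boolP ([set x; a; d] \in W)) => [mW|/negP m2'].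
  apply: (path2 sW mW tW); [adjt x a b | adjt x d c].
case: (boolP ([set x; b; c] \in W)) => [mW|/negP m3'].
  apply: (path2 sW mW tW); [adjt x b a | adjt x c d].
case: (boolP ([set x; b; d] \in W)) => [mW|/negP m4'].
  apply: (path2 sW mW tW); [adjt x b a | adjt x d c].
have m1 : Z [set x; a; c] != 0 -> [set x; a; c] = r.
  by move=> nz; apply/eqP; apply/negPn/negP => ne; apply: m1'; inw.
have m2 : Z [set x; a; d] != 0 -> [set x; a; d] = r.
  by move=> nz; apply/eqP; apply/negPn/negP => ne; apply: m2'; inw.
have m3 : Z [set x; b; c] != 0 -> [set x; b; c] = r.
  by move=> nz; apply/eqP; apply/negPn/negP => ne; apply: m3'; inw.
have m4 : Z [set x; b; d] != 0 -> [set x; b; d] = r.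
  by move=> nz; apply/eqP; apply/negPn/negP => ne; apply: m4'; inw.
have xr : x \in r -> forall u v w : 'I_n, x != u -> x != v -> x != w ->
    [set u; v; w] != r.
  by move=> xr u v w xu xv xw; apply: (neq_w' (y := x)) => //; ds.
case: (boolP (Z [set x; a; c] != 0)) => [n1|/negPn z1].
  have er := m1 n1.
  have xir : x \in r by rewrite -er; ds.
  have z2 : Z [set x; a; d] == 0.
    by apply/negPn/negP => nz; move/eqP: (m2 nz); rewrite -er; apply/negP; ne d.
  have z3 : Z [set x; b; c] == 0.
    by apply/negPn/negP => nz; move/eqP: (m3 nz); rewrite -er; apply/negP; ne b.
  have z4 : Z [set x; b; d] == 0.
    by apply/negPn/negP => nz; move/eqP: (m4 nz); rewrite -er; apply/negP; ne b.
  case: h2 => [o1|[h|h]]; [|by rewrite z2 in h|by rewrite z4 in h].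
  case: h4 => [o2|[h|h]]; [|by rewrite z3 in h|by rewrite z4 in h].
  apply: (path3 (u := [set a; b; d]) (v := [set b; c; d]) sW _ _ tW).
  - by inw; apply: xr.
  - by inw; apply: xr.
  - adjt a b x.
  - adjt b d a.
  - adjt c d b.
case: (boolP (Z [set x; a; d] != 0)) => [n2|/negPn z2].
  have er := m2 n2.
  have xir : x \in r by rewrite -er; ds.
  have z3 : Z [set x; b; c] == 0.
    by apply/negPn/negP => nz; move/eqP: (m3 nz); rewrite -er; apply/negP; ne b.
  have z4 : Z [set x; b; d] == 0.
    by apply/negPn/negP => nz; move/eqP: (m4 nz); rewrite -er; apply/negP; ne b.
  case: h1 => [o1|[h|h]]; [|by rewrite z1 in h|by rewrite z3 in h].
  case: h4 => [o2|[h|h]]; [|by rewrite z3 in h|by rewrite z4 in h].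
  apply: (path3 (u := [set a; b; c]) (v := [set b; c; d]) sW _ _ tW).
  - by inw; apply: xr.
  - by inw; apply: xr.
  - adjt a b x.
  - adjt b c a.
  - adjt c d b.
case: (boolP (Z [set x; b; c] != 0)) => [n3|/negPn z3].
  have er := m3 n3.
  have xir : x \in r by rewrite -er; ds.
  have z4 : Z [set x; b; d] == 0.
    by apply/negPn/negP => nz; move/eqP: (m4 nz); rewrite -er; apply/negP; ne d.
  case: h2 => [o1|[h|h]]; [|by rewrite z2 in h|by rewrite z4 in h].
  case: h3 => [o2|[h|h]]; [|by rewrite z1 in h|by rewrite z2 in h].
  apply: (path3 (u := [set a; b; d]) (v := [set a; c; d]) sW _ _ tW).
  - by inw; apply: xr.
  - by inw; apply: xr.
  - adjt a b x.
  - adjt a d b.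
  - adjt c d a.
case: (boolP (Z [set x; b; d] != 0)) => [n4|/negPn z4].
  have er := m4 n4.
  have xir : x \in r by rewrite -er; ds.
  case: h1 => [o1|[h|h]]; [|by rewrite z1 in h|by rewrite z3 in h].
  case: h3 => [o2|[h|h]]; [|by rewrite z1 in h|by rewrite z2 in h].
  apply: (path3 (u := [set a; b; c]) (v := [set a; c; d]) sW _ _ tW).
  - by inw; apply: xr.
  - by inw; apply: xr.
  - adjt a b x.
  - adjt a c b.
  - adjt c d a.
case: h1 => [o1|[h|h]]; [|by rewrite z1 in h|by rewrite z3 in h].
case: h2 => [o2|[h|h]]; [|by rewrite z2 in h|by rewrite z4 in h].
case: h3 => [o3|[h|h]]; [|by rewrite z1 in h|by rewrite z2 in h].
case: h4 => [o4|[h|h]]; [|by rewrite z3 in h|by rewrite z4 in h].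
case: (boolP ([set a; b; c] == r)) => [/eqP e1|n1].
  apply: (path3 (u := [set a; b; d]) (v := [set a; c; d]) sW _ _ tW).
  - by inw; rewrite -e1; ne d.
  - by inw; rewrite -e1; ne d.
  - adjt a b x.
  - adjt a d b.
  - adjt c d a.
case: (boolP ([set a; c; d] == r)) => [/eqP e3|n3].
  apply: (path3 (u := [set a; b; c]) (v := [set b; c; d]) sW _ _ tW).
  - by inw.
  - by inw; rewrite -e3; ne b.
  - adjt a b x.
  - adjt b c a.
  - adjt c d b.
apply: (path3 (u := [set a; b; c]) (v := [set a; c; d]) sW _ _ tW).
- by inw.
- by inw.
- adjt a b x.
- adjt a c b.
- adjt c d a.
Qed.

Lemma hop0 F n (Z : cochain F n) (r : {set 'I_n}) (p q d e f : 'I_n) s :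
  p != q -> p != d -> p != e -> p != f -> q != d -> q != e -> q != f ->
  d != e -> d != f -> e != f -> is_2cocycle Z ->
  s \in supp2 Z :\ r -> [set p; q; d] \in supp2 Z :\ r ->
  share_edge s [set p; q; d] -> [set d; e; f] \in supp2 Z :\ r ->
  connect (Gr (supp2 Z :\ r)) s [set d; e; f].
Proof.
move=> pq pd pe pf qd qe qf de df ef cZ sW uW su tW.
apply: (connect_trans (y := [set p; q; d])); first exact: edgeW.
have eu : [set p; q; d] = [set d; p; q] by setdec.
rewrite eu in uW *; apply: case1 => //; by rewrite eq_sym.
Qed.

Lemma case0 F n (Z : cochain F n) (r : {set 'I_n}) (a b c d e f : 'I_n) :
  a != b -> a != c -> b != c -> d != e -> d != f -> e != f ->
  a != d -> a != e -> a != f -> b != d -> b != e -> b != f ->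
  c != d -> c != e -> c != f -> is_2cocycle Z ->
  [set a; b; c] \in supp2 Z :\ r -> [set d; e; f] \in supp2 Z :\ r ->
  connect (Gr (supp2 Z :\ r)) [set a; b; c] [set d; e; f].
Proof.
move=> ab ac bc de df ef ad ae af bd be bf cd ce cf cZ sW tW.
have [sZ sr] := inWtri' sW.
have hd := L3 ab ac ad bc bd cd cZ sZ.
have he := L3 ab ac ae bc be ce cZ sZ.
case: (boolP (d \in r)) => dr; last first.
  case: hd => [o|[o|o]].
  - apply: (hop0 (p := b) (q := c)) => //; [by inw; ne d | adjt b c a].
  - apply: (hop0 (p := a) (q := b)) => //; [by inw; ne d | adjt a b c].
  - apply: (hop0 (p := a) (q := c)) => //; [by inw; ne d | adjt a c b].
have et : [set d; e; f] = [set e; d; f] by setdec.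
rewrite et in tW *.
case: he => [o|[o|o]].
- apply: (hop0 (p := b) (q := c)) => //; [by rewrite eq_sym | by inw; ne d | adjt b c a].
- apply: (hop0 (p := a) (q := b)) => //; [by rewrite eq_sym | by inw; ne d | adjt a b c].
- apply: (hop0 (p := a) (q := c)) => //; [by rewrite eq_sym | by inw; ne d | adjt a c b].
Qed.

Lemma card3E (T : finType) (s : {set T}) : #|s| = 3%N ->
  exists a b c, [/\ a != b, a != c, b != c & s = [set a; b; c]].
Proof.
move=> cs.
have : s != set0 by apply/eqP => s0; move: cs; rewrite s0 cards0.
case/set0Pn => a As.
have : #|s :\ a| == 2%N by move: cs; rewrite (cardsD1 a s) As add1n => -[->].
case/cards2P => b [c [bc E]].
have : b \in s :\ a by rewrite E !inE eqxx.
have : c \in s :\ a by rewrite E !inE eqxx orbT.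
rewrite !inE => /andP [ca _] /andP [ba _].
exists a, b, c; split => //; try by rewrite eq_sym.
by rewrite -(setD1K As) E; apply/setP => y; rewrite !inE orbA.
Qed.

Lemma card2x (T : finType) (s : {set T}) (x : T) : #|s| = 3%N -> x \in s ->
  exists a b, [/\ a != b, x != a, x != b & s = [set x; a; b]].
Proof.
move=> cs xs.
have : #|s :\ x| == 2%N by move: cs; rewrite (cardsD1 x s) xs add1n => -[->].
case/cards2P => a [b [ab E]].
have : a \in s :\ x by rewrite E !inE eqxx.
have : b \in s :\ x by rewrite E !inE eqxx orbT.
rewrite !inE => /andP [bx _] /andP [ax _].
exists a, b; split => //; try by rewrite eq_sym.
by rewrite -(setD1K xs) E; apply/setP => y; rewrite !inE orbA.
Qed.

Lemma conn F n (Z : cochain F n) (r : {set 'I_n}) s t : is_2cocycle Z ->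
  s \in supp2 Z :\ r -> t \in supp2 Z :\ r -> connect (Gr (supp2 Z :\ r)) s t.
Proof.
move=> cZ sW tW.
have cs : #|s| = 3%N by move: sW; rewrite !inE => /and3P [_ /eqP].
have ct : #|t| = 3%N by move: tW; rewrite !inE => /and3P [_ /eqP].
have le3 : (#|s :&: t| <= 3)%N by rewrite -cs subset_leq_card // subsetIl.
have dj : forall u v, u \in s -> v \in t -> u \notin s :&: t -> u != v.
  by move=> u v us vt; apply: contra => /eqP uv; rewrite inE us uv vt.
case E: #|s :&: t| le3 => [|[|[|[|k]]]] // _.
- have E0 := cards0_eq E.
  have dj0 : forall u v, u \in s -> v \in t -> u != v.
    by move=> u v us vt; apply: dj => //; rewrite E0 inE.
  have [a [b [c [ab ac bc es]]]] := card3E cs.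
  have [d [e [f [de df ef et]]]] := card3E ct.
  have As : forall y, y \in [set a; b; c] -> y \in s by move=> y; rewrite es.
  have At : forall y, y \in [set d; e; f] -> y \in t by move=> y; rewrite et.
  have dj' : forall u v, u \in [set a; b; c] -> v \in [set d; e; f] -> u != v.
    by move=> u v us vt; apply: dj0; [apply: As | apply: At].
  rewrite es et in sW tW *.
  by apply: case0 => //; apply: dj'; ds.
- have /cards1P [x Ex] : #|s :&: t| == 1%N by rewrite E.
  have xst : x \in s :&: t by rewrite Ex inE.
  move: (xst); rewrite inE => /andP [xs xt].
  have djx : forall u v, u \in s -> v \in t -> u != x -> u != v.
    by move=> u v us vt ux; apply: dj => //; rewrite Ex inE.
  have [a [b [ab xa xb es]]] := card2x cs xs.
  have [c [d [cd xc xd et]]] := card2x ct xt.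
  have As : forall y, y \in [set x; a; b] -> y \in s by move=> y; rewrite es.
  have At : forall y, y \in [set x; c; d] -> y \in t by move=> y; rewrite et.
  have ac : a != c by apply: djx; [apply: As | apply: At | rewrite eq_sym]; ds.
  have ad : a != d by apply: djx; [apply: As | apply: At | rewrite eq_sym]; ds.
  have bc : b != c by apply: djx; [apply: As | apply: At | rewrite eq_sym]; ds.
  have bd : b != d by apply: djx; [apply: As | apply: At | rewrite eq_sym]; ds.
  rewrite es et in sW tW *.
  by apply: case1.
- apply: edgeW => //; rewrite /share_edge E eqxx andbT.
  apply/eqP => st; move: E; rewrite st setIid ct.
  by [].
- have : s :&: t == s by rewrite eqEcard subsetIl E cs.
  move/eqP => est.
  have sst : s \subset t by rewrite -est subsetIr.
  have : s == t by rewrite eqEcard sst cs ct.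
  by move/eqP => ->; apply: connect0.
Qed.

Theorem theorem4p8 (F : fieldType) (n : nat) (Z : cochain F n) :
  (4 <= n)%N -> is_2cocycle Z -> nonzero_2cochain Z ->
  k_connected (supp2 Z) (@share_edge n) 2.
Proof.
move=> n4 cZ [s0 [c0 nz0]] D DS Dlt.
have [r Er] : exists r, supp2 Z :\: D = supp2 Z :\ r.
  move: Dlt; rewrite ltnS leq_eqVlt ltnS leqn0 => /orP [/cards1P [r ->]|/eqP /cards0_eq ->].
    by exists r.
  exists set0; apply/setP => u; rewrite !inE.
  by case: (u =P set0) => // ->; rewrite cards0.
rewrite Er; split; last first.
  by move=> x y xW yW; apply: conn.
have s0S : s0 \in supp2 Z by rewrite inE c0 nz0.
have [a [b [c [ab ac bc es]]]] := card3E c0.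
have : ~: s0 != set0.
  apply/eqP => e; have := cardsC s0; rewrite e cards0 c0 card_ord addn0 => en.
  by move: n4; rewrite -en.
case/set0Pn => p; rewrite inE es !inE => /norP [/norP [pa pb] pc].
rewrite es in s0S nz0.
have ap : a != p by rewrite eq_sym.
have bp : b != p by rewrite eq_sym.
have cp : c != p by rewrite eq_sym.
have := L3 ab ac ap bc bp cp cZ nz0.
case: (boolP (p \in r)) => pr.
  have sr : [set a; b; c] != r by ne p.
  by move=> _; apply/set0Pn; exists [set a; b; c]; apply: inWtri.
case=> [o|[o|o]]; apply/set0Pn.
- by exists [set b; c; p]; apply: inWtri => //; ne p.
- by exists [set a; b; p]; apply: inWtri => //; ne p.
- by exists [set a; c; p]; apply: inWtri => //; ne p.
Qed.
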